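(* Let $L$ be a finite-dimensional Lie algebra over a field $F$, let $M$ be a maximal subalgebra of $L$ and let $B$ be an ideal of $L$ with $B\subseteq M$. Let $C/B$ be an ideal completion of $M/B$ in $L/B$, put $k_{L/B}(C/B)=K/B$, and let $D$ be an ideal completion of $M$ in $L$. Then $C/K\cong D/k_L(D)$.
   Context: For a Lie algebra $L$ and a nonzero subalgebra $X$ of $L$, the strict core $k_L(X)$ is the sum of all ideals of $L$ that are proper subalgebras of $X$ (it is $0$ if there are none). A subalgebra $C$ of $L$ is a completion of a maximal subalgebra $M$ if $C\not\subseteq M$ but every proper subalgebra of $C$ that is an ideal of $L$ is contained in $M$. An ideal completion of $M$ is a completion of $M$ which is an ideal of $L$. *)

(* Defs.v *)
From HB Require Import structures.
From mathcomp Require Import all_boot all_order all_algebra.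
From Stdlib Require Import ClassicalEpsilon.
Set Implicit Arguments.
Unset Strict Implicit.
Unset Printing Implicit Defensive.
Import GRing.Theory.
Local Open Scope ring_scope.

Section Lie.
Variables (F : fieldType) (L : vectType F) (br : L -> L -> L).

Definition is_lie : Prop :=
  [/\ (forall (a : F) (x y z : L), br (a *: x + y) z = a *: br x z + br y z),
      (forall (a : F) (x y z : L), br z (a *: x + y) = a *: br z x + br z y),
      (forall x : L, br x x = 0) &
      (forall x y z : L, br x (br y z) + br y (br z x) + br z (br x y) = 0)].

(* Notions in the quotient algebra L/B, for a subspace B (an ideal of L);
   a subspace X/B of L/B is represented by X with B <= X.
   Membership of [x,y] + B in X/B means [x,y] \in X + B. *)
Definition subalg_mod (B X : {vspace L}) : Prop :=
  (B <= X)%VS /\ forall x y, x \in X -> y \in X -> br x y \in (X + B)%VS.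

Definition ideal_mod (B X : {vspace L}) : Prop :=
  (B <= X)%VS /\ forall x y, y \in X -> br x y \in (X + B)%VS.

(* proper subspace:  X/B is a proper subset of Y/B  iff  X < Y *)
Definition proper_sub (X Y : {vspace L}) : bool := (X <= Y)%VS && (X != Y).

Definition completion_mod (B M C : {vspace L}) : Prop :=
  [/\ subalg_mod B C, ~~ (C <= M)%VS &
      forall I, subalg_mod B I -> proper_sub I C -> ideal_mod B I -> (I <= M)%VS].

Definition ideal_completion_mod (B M C : {vspace L}) : Prop :=
  completion_mod B M C /\ ideal_mod B C.

Definition is_sum_mod (B : {vspace L}) (P : {vspace L} -> Prop) (K : {vspace L}) :=
  [/\ (B <= K)%VS, (forall I, P I -> (I <= K)%VS) &
      (forall W, (B <= W)%VS -> (forall I, P I -> (I <= W)%VS) -> (K <= W)%VS)].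

Definition strict_core_cand (B X I : {vspace L}) : Prop :=
  [/\ ideal_mod B I, subalg_mod B I & proper_sub I X].

(* k_{L/B}(X/B) = (strict_core_mod B X)/B *)
Definition strict_core_mod (B X : {vspace L}) : {vspace L} :=
  epsilon (inhabits B) (is_sum_mod B (strict_core_cand B X)).

Definition subalg (X : {vspace L}) := subalg_mod 0%VS X.
Definition ideal (X : {vspace L}) := ideal_mod 0%VS X.
Definition ideal_completion (M C : {vspace L}) := ideal_completion_mod 0%VS M C.
Definition strict_core (X : {vspace L}) := strict_core_mod 0%VS X.

Definition maximal_subalg (M : {vspace L}) : Prop :=
  [/\ subalg M, M != fullv &
      forall S, subalg S -> (M <= S)%VS -> S = M \/ S = fullv].

(* X/Y is isomorphic (as a Lie algebra) to X'/Y' : there is a linear map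
   X -> X' (extended to L) inducing a bijective bracket-preserving map
   X/Y -> X'/Y'.  Every linear map X/Y -> X'/Y' lifts to such an f. *)
Definition sect_iso (X Y X' Y' : {vspace L}) : Prop :=
  exists f : 'End(L),
    [/\ (f @: X <= X')%VS, (f @: Y <= Y')%VS,
        (forall x, x \in X -> f x \in Y' -> x \in Y),
        (X' <= f @: X + Y')%VS &
        (forall x y, x \in X -> y \in X -> f (br x y) - br (f x) (f y) \in Y')].

End Lie.

(* Main.v *)
Require Import Defs.
From mathcomp Require Import all_boot all_order all_algebra.
From mathcomp Require Import zify.
From Stdlib Require Import ClassicalEpsilon Classical.
Set Implicit Arguments.
Unset Strict Implicit.
Unset Printing Implicit Defensive.
Import GRing.Theory.
Local Open Scope ring_scope.

Section Helpers.
Variables (F : fieldType) (L : vectType F) (br : L -> L -> L).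

Definition clos (X : {vspace L}) := forall x y, y \in X -> br x y \in X.

Lemma brDl (Hl : is_lie br) x y z : br (x + y) z = br x z + br y z.
Proof. by case: Hl => H _ _ _; have := H 1 x y z; rewrite !scale1r. Qed.
Lemma brDr (Hl : is_lie br) x y z : br z (x + y) = br z x + br z y.
Proof. by case: Hl => _ H _ _; have := H 1 x y z; rewrite !scale1r. Qed.
Lemma br0l (Hl : is_lie br) z : br 0 z = 0.
Proof.
have := brDl Hl 0 0 z; rewrite addr0 => /esym /eqP.
by rewrite -subr_eq0 addrK => /eqP.
Qed.
Lemma br0r (Hl : is_lie br) z : br z 0 = 0.
Proof.
have := brDr Hl 0 0 z; rewrite addr0 => /esym /eqP.
by rewrite -subr_eq0 addrK => /eqP.
Qed.
Lemma brNl (Hl : is_lie br) x z : br (- x) z = - br x z.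
Proof.
apply/eqP; rewrite -subr_eq0 opprK -brDl // addNr br0l //.
Qed.
Lemma brNr (Hl : is_lie br) x z : br z (- x) = - br z x.
Proof.
apply/eqP; rewrite -subr_eq0 opprK -brDr // addNr br0r //.
Qed.
Lemma brBl (Hl : is_lie br) x y z : br (x - y) z = br x z - br y z.
Proof. by rewrite brDl // brNl. Qed.
Lemma brBr (Hl : is_lie br) x y z : br z (x - y) = br z x - br z y.
Proof. by rewrite brDr // brNr. Qed.
Lemma br_anti (Hl : is_lie br) x y : br x y = - br y x.
Proof.
have := Hl => -[_ _ Hxx _].
have := Hxx (x + y); rewrite !brDl // !brDr // !Hxx add0r addr0.
by move/eqP; rewrite addr_eq0 => /eqP.
Qed.

Lemma clos_r (Hl : is_lie br) X (cX : clos X) x y : x \in X -> br x y \in X.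
Proof. by move=> xX; rewrite br_anti // memvN; apply: cX. Qed.

Lemma clos_add (Hl : is_lie br) X Y : clos X -> clos Y -> clos (X + Y)%VS.
Proof.
move=> cX cY x y /memv_addP[u uX [v vY ->]].
by rewrite brDr //; apply: memv_add; [apply: cX | apply: cY].
Qed.

Lemma clos_cap X Y : clos X -> clos Y -> clos (X :&: Y)%VS.
Proof.
by move=> cX cY x y; rewrite !memv_cap => /andP[a b]; rewrite cX ?cY.
Qed.

Lemma clos0 (Hl : is_lie br) : clos 0%VS.
Proof. by move=> x y; rewrite memv0 => /eqP ->; rewrite br0r // mem0v. Qed.

Lemma ideal_mod_clos B X : ideal_mod br B X -> clos X.
Proof. by case=> /addv_idPl HB H x y /H; rewrite HB. Qed.

Lemma decomp (U V : {vspace L}) x : x \in (U + V)%VS -> x = addv_pi1 U V x + addv_pi2 U V x.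
Proof. by move=> H; rewrite addv_pi1_pi2. Qed.

Lemma compl_prop B M C : completion_mod br B M C ->
  forall I, (B <= I)%VS -> (I <= C)%VS -> clos I -> I != C -> (I <= M)%VS.
Proof.
case=> _ _ H I BI IC cI nIC; apply: H.
- by split=> // x y _ yI; apply: (subvP (addvSl _ _)); apply: cI.
- by apply/andP; split.
- by split=> // x y yI; apply: (subvP (addvSl _ _)); apply: cI.
Qed.

Lemma core_spec (Hl : is_lie br) B M C : (B <= M)%VS -> clos B ->
  ideal_completion_mod br B M C ->
  let K := strict_core_mod br B C in
  [/\ (B <= K)%VS, (K <= M)%VS, (K <= C)%VS, clos K &
   forall I, (B <= I)%VS -> (I <= C)%VS -> (I <= M)%VS -> clos I -> (I <= K)%VS].
Proof.
move=> BM cB [[[BC _] nCM Hc] _].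
set P := strict_core_cand br B C.
have candM : forall I, P I -> (I <= M)%VS.
  by move=> I [Hid Hsub Hpr]; apply: Hc.
have candI : forall I, P I -> [/\ (B <= I)%VS, (I <= C)%VS & clos I].
  move=> I [Hid _ /andP[IC _]]; split => //; first by case: Hid.
  exact: ideal_mod_clos Hid.
have candP : forall I, (B <= I)%VS -> (I <= C)%VS -> (I <= M)%VS -> clos I -> P I.
  move=> I BI IC IM cI; split.
  - by split=> // x y yI; apply: (subvP (addvSl _ _)); apply: cI.
  - by split=> // x y _ yI; apply: (subvP (addvSl _ _)); apply: cI.
  - apply/andP; split=> //; apply/eqP => E; move: nCM; by rewrite -E IM.
have ex : forall n I, P I -> (\dim {:L} - \dim I <= n)%N ->
    exists K0, P K0 /\ forall J, P J -> (J <= K0)%VS.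
  { elim=> [|n IH] I PI Hd.
  all: case: (classic (exists J, P J /\ ~~ (J <= I)%VS)) => [[J [PJ nJI]]|nex];
    last by exists I; split=> // J PJ; apply: negbNE; apply/negP => H; apply: nex; exists J.
  all: have [BI IC cI] := candI _ PI; have [BJ JC cJ] := candI _ PJ.
  all: have PIJ : P (I + J)%VS by apply: candP;
     [apply: subv_trans BI (addvSl _ _) | rewrite subv_add IC | rewrite subv_add !candM | apply: clos_add].
  all: have [le eqd] := dimv_leqif_eq (addvSl I J).
  all: have ne : (\dim I != \dim (I + J)%VS)%N by
     rewrite eqd; apply/eqP => E; move: nJI; rewrite E addvSr.
  all: have lef := dimvS (subvf (I + J)%VS).
  - exfalso. move: le ne lef Hd. lia.
  - apply: (IH (I + J)%VS) => //. move: le ne lef Hd. lia. }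
have [K0 [PK0 HK0]] := ex _ _ (candP B (subvv _) BC BM cB) (leqnn _).
rewrite /strict_core_mod -/P.
set K := epsilon _ _.
have : is_sum_mod B P K.
  apply: epsilon_spec; exists K0; split; [by case: (candI _ PK0) | by [] |].
  by move=> W _ HW; apply: HW.
case=> _ HK1 HK2.
have -> : K = K0.
  apply: subv_anti; rewrite HK1 // andbT; apply: HK2 => //; by case: (candI _ PK0).
have [BK KC cK] := candI _ PK0.
split=> //; first exact: candM.
by move=> I BI IC IM cI; apply: HK0; apply: candP.
Qed.


Lemma sum_full (Hl : is_lie br) M X : maximal_subalg br M -> clos X ->
  ~~ (X <= M)%VS -> (M + X = fullv)%VS.
Proof.
case=> [[_ cM] _ Hmax] cX nXM.
have cM' : forall x y, x \in M -> y \in M -> br x y \in M.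
  by move=> x y xM yM; have := cM x y xM yM; rewrite addv0.
have sub : subalg br (M + X)%VS.
  split; first exact: sub0v.
  move=> x y /memv_addP[m1 m1M [c1 c1X ->]] /memv_addP[m2 m2M [c2 c2X ->]].
  rewrite addv0 brDl // !brDr //.
  have inX : forall z, z \in X -> z \in (M + X)%VS by move=> z; apply: (subvP (addvSr _ _)).
  have inM : forall z, z \in M -> z \in (M + X)%VS by move=> z; apply: (subvP (addvSl _ _)).
  apply: memvD; apply: memvD.
  - by apply: inM; apply: cM'.
  - by apply: inX; apply: cX.
  - by apply: inX; apply: (clos_r Hl cX).
  - by apply: inX; apply: cX.
have [E|//] := Hmax (M + X)%VS sub (addvSl _ _).
by move: nXM; rewrite -E addvSr.
Qed.

End Helpers.

Lemma zm (V : zmodType) (w x y z : V) : w + x + (y + z) + z = w + (x + z) + (y + z).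
Proof. by rewrite -!addrA (addrCA z y z). Qed.
Lemma key (F : fieldType) (L : vectType F) (br : L -> L -> L) (Hl : is_lie br) a b c d :
  br (a+b) (c+d) + br b d = br a c + br (a+b) d + br b (c+d).
Proof.
by rewrite !(brDl Hl) !(brDr Hl) zm.
Qed.
Lemma key2 (F : fieldType) (L : vectType F) (br : L -> L -> L) (Hl : is_lie br) a b c d :
  br (a+b) (c+d) - br b d = br a (c+d) + br b c.
Proof.
by rewrite (brDl Hl) (brDr Hl c d b) addrA addrK.
Qed.

Unset Implicit Arguments.

Theorem proposition2p3 (F : fieldType) (L : vectType F) (br : L -> L -> L)
  (Hlie : is_lie br) (M B C D : {vspace L}) :
  maximal_subalg br M ->
  ideal br B -> (B <= M)%VS ->
  ideal_completion_mod br B M C ->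
  ideal_completion br M D ->
  sect_iso br C (strict_core_mod br B C) D (strict_core br D).
Proof.
move=> Hmax idB BM HC HD.
have Hl := Hlie.
have cB := ideal_mod_clos idB.
have := core_spec Hl BM cB HC; set K := strict_core_mod br B C => -[BK KM KC cK HK].
have := core_spec Hl (sub0v M) (clos0 Hl) HD.
rewrite /strict_core; set K' := strict_core_mod br 0 D => -[_ K'M K'D cK' HK'].
have [[[BC _] nCM _] idC] := HC.
have [[_ nDM _] idD] := HD.
have cC := ideal_mod_clos idC; have cD := ideal_mod_clos idD.
have cM : forall x y, x \in M -> y \in M -> br x y \in M.
  by case: Hmax => -[_ H] _ _ x y xM yM; have := H x y xM yM; rewrite addv0.
have MC := sum_full Hl Hmax cC nCM; have MD := sum_full Hl Hmax cD nDM.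
case: (boolP (C :&: D <= M)%VS) => CDM.
-
  set p := addv_pi2 M D; set q := addv_pi1 M D.
  have dec : forall x, x = q x + p x by move=> x; apply: decomp; rewrite MD memvf.
  have Ep : forall u, p u = u - q u by move=> u; rewrite {2}(dec u) [q u + _]addrC addrK.
  set p2 := addv_pi2 M C; set q2 := addv_pi1 M C.
  have dec2 : forall x, x = q2 x + p2 x by move=> x; apply: decomp; rewrite MC memvf.
  have inCD : forall z, z \in C -> z \in D -> z \in M.
    by move=> z a b; apply: (subvP CDM); rewrite memv_cap a b.
  have MDK : forall z, z \in M -> z \in D -> z \in K'.
    move=> z zM zD; have : (M :&: D <= K')%VS.
      apply: HK' => //; [exact: sub0v | exact: capvSr | exact: capvSl |].
      move=> x y; rewrite memv_cap => /andP[yM yD].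
      rewrite (dec2 x) (brDl Hl) memv_cap; apply/andP; split; apply: memvD.
      + by apply: cM => //; apply: memv_pi1.
      + by apply: inCD; [apply: (clos_r Hl cC); apply: memv_pi2 | apply: cD].
      + exact: cD.
      + exact: cD.
    by move/subvP; apply; rewrite memv_cap zM.
  have MCK : forall z, z \in M -> z \in C -> z \in K.
    move=> z zM zC; have : (M :&: C <= K)%VS.
      apply: HK => //; [by rewrite subv_cap BM | exact: capvSr | exact: capvSl |].
      move=> x y; rewrite memv_cap => /andP[yM yC].
      rewrite (dec x) (brDl Hl) memv_cap; apply/andP; split; apply: memvD.
      + by apply: cM => //; apply: memv_pi1.
      + by apply: inCD; [apply: cC | apply: (clos_r Hl cD); apply: memv_pi2].
      + exact: cC.
      + exact: cC.
    by move/subvP; apply; rewrite memv_cap zM.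
  exists (- p); split.
  + by apply/subvP => _ /memv_imgP[u _ ->]; rewrite opp_lfunE memvN memv_pi2.
  + apply/subvP => _ /memv_imgP[u uK ->]; rewrite opp_lfunE memvN.
    apply: MDK; last exact: memv_pi2.
    by rewrite Ep memvB //; [apply: (subvP KM) | apply: memv_pi1].
  + move=> x xC; rewrite opp_lfunE memvN => pK'.
    apply: MCK => //; rewrite (dec x) memvD //; first exact: memv_pi1.
    exact: (subvP K'M).
  + apply/subvP => d dD.
    set c := p2 d.
    have -> : d = (d - p c) + p c by rewrite subrK.
    rewrite addrC; apply: memv_add.
    * have -> : p c = (- p) (- c) by rewrite opp_lfunE linearN opprK.
      by apply: memv_img; rewrite memvN memv_pi2.
    * apply: MDK; last by rewrite memvB //; apply: memv_pi2.
      rewrite {1}(dec2 d) -/c -addrA memvD //; first exact: memv_pi1.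
      by rewrite Ep subKr; apply: memv_pi1.
  + move=> x y xC yC.
    rewrite !opp_lfunE (brNl Hl) (brNr Hl) opprK -opprD memvN.
    apply: MDK; last by rewrite memvD //; [apply: memv_pi2 | apply: cD; apply: memv_pi2].
    rewrite Ep addrAC.
    have := key Hl (q x) (p x) (q y) (p y); rewrite -!dec => ->.
    rewrite memvB //; last exact: memv_pi1.
    rewrite !memvD //.
    * by apply: cM; apply: memv_pi1.
    * by apply: inCD; [apply: (clos_r Hl cC) | apply: cD; apply: memv_pi2].
    * by apply: inCD; [apply: cC | apply: (clos_r Hl cD); apply: memv_pi2].
-
  have DC : (D <= C)%VS.
    case E: (C :&: D == D)%VS; first by move/eqP: E => <-; exact: capvSl.
    exfalso; move: CDM; rewrite (compl_prop HD.1 (sub0v _) (capvSr _ _) (clos_cap cC cD) (negbT E)).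
    done.
  have CBD : (C <= B + D)%VS.
    case E: (D + B == C)%VS; first by move/eqP: E => <-; rewrite addvC.
    exfalso; have := compl_prop HC.1 (addvSr _ _) _ (clos_add Hl cD cB) (negbT E).
    rewrite subv_add DC BC => /(_ isT); rewrite subv_add => /andP[DM _].
    by move: CDM; rewrite (subv_trans (capvSr _ _) DM).
  set p := addv_pi2 B D; set q := addv_pi1 B D.
  have dec : forall x, x \in C -> x = q x + p x.
    by move=> x xC; apply: decomp; apply: (subvP CBD).
  have Ep : forall u, u \in C -> p u = u - q u.
    by move=> u uC; rewrite {2}(dec u uC) [q u + _]addrC addrK.
  have K'K : (K' <= K)%VS.
    apply: subv_trans (addvSl K' B) _; apply: HK.
    - exact: addvSr.
    - by rewrite subv_add (subv_trans K'D DC) BC.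
    - by rewrite subv_add K'M BM.
    - exact: clos_add.
  have BDK : forall z, z \in B -> z \in D -> z \in K'.
    move=> z a b; have : (B :&: D <= K')%VS.
      apply: HK'; [exact: sub0v | exact: capvSr | exact: subv_trans (capvSl _ _) BM |].
      exact: clos_cap.
    by move/subvP; apply; rewrite memv_cap a b.
  have KDK : forall z, z \in K -> z \in D -> z \in K'.
    move=> z a b; have : (K :&: D <= K')%VS.
      apply: HK'; [exact: sub0v | exact: capvSr | exact: subv_trans (capvSl _ _) KM |].
      exact: clos_cap.
    by move/subvP; apply; rewrite memv_cap a b.
  exists p; split.
  + by apply/subvP => _ /memv_imgP[u _ ->]; apply: memv_pi2.
  + apply/subvP => _ /memv_imgP[u uK ->].
    apply: KDK; last exact: memv_pi2.
    rewrite Ep; last exact: (subvP KC).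
    by rewrite memvB //; apply: (subvP BK); apply: memv_pi1.
  + move=> x xC pK'; rewrite (dec x xC) memvD //.
    * by apply: (subvP BK); apply: memv_pi1.
    * exact: (subvP K'K).
  + apply/subvP => d dD.
    rewrite -(addv_pi2_id B dD) -[p d]addr0 -/p; apply: memv_add; last exact: mem0v.
    by apply: memv_img; apply: (subvP DC).
  + move=> x y xC yC.
    apply: BDK; last by rewrite memvB //; [apply: memv_pi2 | apply: cD; apply: memv_pi2].
    rewrite Ep; last exact: cC.
    rewrite addrAC.
    have := key2 Hl (q x) (p x) (q y) (p y); rewrite -(dec x xC) -(dec y yC) => ->.
    rewrite memvB //; last exact: memv_pi1.
    rewrite memvD //.
    * by apply: (clos_r Hl cB); apply: memv_pi1.
    * by apply: cB; apply: memv_pi1.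
Qed.
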